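(* Let $A,c>0$ be constants. For $n=1,2,\dots$ let $N_n$ be an index set and for $k\in N_n$ let $\mathbf M_{k,n}\in\mathbb R^{n\times p_n}$, $S_{k,n}\subseteq\{1,\dots,p_n\}$ and $\boldsymbol\beta_{k,n}\in\mathbb R^{p_n}$; let $\lambda_n=A\sqrt{\log(p_n)/n}$. Suppose that for some $\xi>c$, $$\sup_{k\in N_n}\frac{|S_{k,n}|\sqrt{\log(p_n)^2/n}}{\kappa^2(\xi,S_{k,n},\mathbf M_{k,n})}\to0\quad\text{and}\quad\sup_{k\in N_n}\sqrt{\log(p_n)}\,\|(\boldsymbol\beta_{k,n})_{S_{k,n}^c}\|_1\to0.$$ Then there exists $\xi'>c$ such that for every $c_1>0$, $\sup_{k\in N_n}\sqrt{\log(p_n)}\,\mu(c_1\lambda_n,\xi',\boldsymbol\beta_{k,n},\mathbf M_{k,n})\to0$.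
   Context: With $\mathscr C(\xi,T)=\{\mathbf u\ne\mathbf0:\|\mathbf u_{T^c}\|_1\le\xi\|\mathbf u_T\|_1\}$, the compatibility factor is $\kappa(\xi,T,\mathbf M)=\inf\{(\|\mathbf M\mathbf u\|_2/\sqrt n)/(\|\mathbf u_T\|_1/|T|):\mathbf u\in\mathscr C(\xi,T)\}$. For $\xi>1$, $\lambda>0$, $\boldsymbol\beta\in\mathbb R^p$, $\mathbf M\in\mathbb R^{n\times p}$, $$\mu(\lambda,\xi,\boldsymbol\beta,\mathbf M)=(\xi+1)\min_{T\subseteq\{1,\dots,p\}}\inf_{0<\nu<1}\max\Big[\frac{\|\boldsymbol\beta_{T^c}\|_1}{\nu},\ \frac{\lambda|T|/\{2(1-\nu)\}}{\kappa^2\{(\xi+\nu)/(1-\nu),T,\mathbf M\}}\Big].$$ *)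

(* Defs.v *)
From Stdlib Require Import Reals Lra ClassicalEpsilon.
Open Scope R_scope.

(* Index sets {1,...,p} are represented 0-based as {0,...,p-1}.
   Vectors in R^p are functions nat -> R (only indices j < p matter),
   matrices in R^{n x p} are functions nat -> nat -> R (entries M i j, i<n, j<p),
   subsets T of {0,...,p-1} are boolean predicates nat -> bool
   (only the values at j < p matter). *)

Fixpoint sumR (m : nat) (f : nat -> R) : R :=
  match m with O => 0 | S m' => sumR m' f + f m' end.

Definition card (p : nat) (T : nat -> bool) : R :=
  sumR p (fun j => if T j then 1 else 0).

Definition l1_on (p : nat) (T : nat -> bool) (u : nat -> R) : R :=
  sumR p (fun j => if T j then Rabs (u j) else 0).

Definition compl (T : nat -> bool) : nat -> bool := fun j => negb (T j).

Definition l2_Mu (n p : nat) (M : nat -> nat -> R) (u : nat -> R) : R :=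
  sqrt (sumR n (fun i => (sumR p (fun j => M i j * u j)) ^ 2)).

Definition in_cone (p : nat) (xi : R) (T : nat -> bool) (u : nat -> R) : Prop :=
  (exists j, (j < p)%nat /\ u j <> 0) /\
  l1_on p (compl T) u <= xi * l1_on p T u.

Definition is_glb (E : R -> Prop) (m : R) : Prop :=
  (forall x, E x -> m <= x) /\ (forall m', (forall x, E x -> m' <= x) -> m' <= m).

Definition Rinf (E : R -> Prop) : R := epsilon (inhabits 0) (is_glb E).

(* infimum with values in R u {+oo}: None stands for +oo = inf of the empty set *)
Definition Inf_ext (E : R -> Prop) : option R :=
  if excluded_middle_informative (exists x, E x) then Some (Rinf E) else None.

Definition kappa (n p : nat) (xi : R) (T : nat -> bool) (M : nat -> nat -> R)
  : option R :=
  Inf_ext (fun r => exists u, in_cone p xi T u /\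
             r = (l2_Mu n p M u / sqrt (INR n)) / (l1_on p T u / card p T)).

Definition esq (k : option R) : option R := option_map (fun x => x ^ 2) k.

(* division a / b of a finite nonnegative a by b in [0,+oo]:
   a/+oo = 0, a/0 = +oo for a > 0, and 0/0 := 0 (degenerate convention) *)
Definition ediv (a : R) (b : option R) : option R :=
  match b with
  | None => Some 0
  | Some b' =>
      if Req_EM_T b' 0 then (if Req_EM_T a 0 then Some 0 else None)
      else Some (a / b')
  end.

(* The min over T of the inf over nu is the inf over
   all pairs (T, nu); pairs whose second term is +oo are irrelevant since the
   pair (T = empty, nu) always gives a finite value. *)
Definition mu (n p : nat) (lam xi : R) (beta : nat -> R) (M : nat -> nat -> R) : R :=
  (xi + 1) *
  Rinf (fun r => exists (T : nat -> bool) (nu b : R),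
          0 < nu < 1 /\
          ediv (lam * card p T / (2 * (1 - nu)))
               (esq (kappa n p ((xi + nu) / (1 - nu)) T M)) = Some b /\
          r = Rmax (l1_on p (compl T) beta / nu) b).

(* sup_{k in N_n} f n k -> 0 as n -> oo, for nonnegative f
   (with the convention sup over an empty index set = 0) *)
Definition sup_to_zero (N : nat -> Type) (f : forall n, N n -> R) : Prop :=
  forall eps, 0 < eps -> exists n0, forall n, (n0 <= n)%nat ->
    forall k : N n, f n k <= eps.

Definition sup_to_zero_ext (N : nat -> Type) (f : forall n, N n -> option R) : Prop :=
  forall eps, 0 < eps -> exists n0, forall n, (n0 <= n)%nat ->
    forall k : N n, exists r, f n k = Some r /\ r <= eps.

(* Main.v *)
Require Import Defs.
From Stdlib Require Import Reals Lra Lia ClassicalEpsilon.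
Open Scope R_scope.

Lemma sumR_nonneg m f : (forall j, 0 <= f j) -> 0 <= sumR m f.
Proof. intro H; induction m; simpl; [lra|]. specialize (H m); lra. Qed.

Lemma l1_nonneg p T u : 0 <= l1_on p T u.
Proof. apply sumR_nonneg; intro j; destruct (T j); [apply Rabs_pos|lra]. Qed.

Lemma card_nonneg p T : 0 <= card p T.
Proof. apply sumR_nonneg; intro j; destruct (T j); lra. Qed.

Lemma Rinv_nonneg y : 0 <= y -> 0 <= / y.
Proof.
  intro H; destruct (Req_dec y 0) as [->|Hy]; [rewrite Rinv_0; lra|].
  left; apply Rinv_0_lt_compat; lra.
Qed.

Lemma div_nonneg x y : 0 <= x -> 0 <= y -> 0 <= x / y.
Proof. intros; unfold Rdiv; apply Rmult_le_pos; auto using Rinv_nonneg. Qed.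

Lemma glb_exists E : (exists x, E x) -> (forall x, E x -> 0 <= x) ->
  is_glb E (Rinf E).
Proof.
  intros Hne Hlb. unfold Rinf. apply epsilon_spec.
  destruct (completeness (fun y => E (- y))) as [l [Hl1 Hl2]].
  - exists 0. intros y Hy. specialize (Hlb _ Hy). lra.
  - destruct Hne as [x Hx]. exists (- x). rewrite Ropp_involutive; auto.
  - exists (- l). split.
    + intros x Hx. assert (- x <= l). { apply Hl1. rewrite Ropp_involutive; auto. } lra.
    + intros m' Hm'. assert (l <= - m'). { apply Hl2. intros y Hy. specialize (Hm' _ Hy). lra. } lra.
Qed.

Lemma kappa_set_nonneg n p xi T M x :
  (exists u, in_cone p xi T u /\
     x = (l2_Mu n p M u / sqrt (INR n)) / (l1_on p T u / card p T)) -> 0 <= x.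
Proof.
  intros [u [_ ->]]. apply div_nonneg; apply div_nonneg;
  auto using l1_nonneg, card_nonneg, sqrt_pos.
  unfold l2_Mu; apply sqrt_pos.
Qed.

Lemma kappa_mono n p xi1 xi2 T M K1 : xi1 <= xi2 ->
  kappa n p xi1 T M = Some K1 -> exists K2, kappa n p xi2 T M = Some K2 /\ 0 <= K2 <= K1.
Proof.
  intros Hle. unfold kappa, Inf_ext.
  destruct excluded_middle_informative as [He1|He1]; [|discriminate].
  intro HK; injection HK; intros <-.
  assert (Hsub : forall x, (exists u, in_cone p xi1 T u /\
     x = (l2_Mu n p M u / sqrt (INR n)) / (l1_on p T u / card p T)) ->
     (exists u, in_cone p xi2 T u /\
     x = (l2_Mu n p M u / sqrt (INR n)) / (l1_on p T u / card p T))).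
  { intros x [u [[Hu1 Hu2] Hx]]. exists u; split; auto. split; auto.
    pose proof (l1_nonneg p T u). nra. }
  destruct excluded_middle_informative as [He2|He2].
  2:{ exfalso; apply He2. destruct He1 as [x Hx]; exists x; auto. }
  eexists; split; [reflexivity|].
  pose proof (glb_exists _ He1 (kappa_set_nonneg n p xi1 T M)) as [G1a G1b].
  pose proof (glb_exists _ He2 (kappa_set_nonneg n p xi2 T M)) as [G2a G2b].
  split.
  - apply G2b. apply kappa_set_nonneg.
  - apply G1b. intros x Hx. apply G2a. auto.
Qed.

Lemma key (a a0 q C r : R) (k1 k2 : option R) :
  0 <= a0 -> 0 < q -> 0 <= C -> q * a = C * a0 ->
  (forall K1, k1 = Some K1 -> exists K2, k2 = Some K2 /\ 0 <= K2 <= K1) ->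
  ediv a0 (esq k2) = Some r ->
  exists b, ediv a (esq k1) = Some b /\ q * b <= C * r.
Proof.
  intros Ha0 Hq HC Hqa Hk Hr.
  assert (Hr0 : 0 <= r).
  { destruct k2 as [K2|]; simpl in Hr.
    - destruct Req_EM_T; [destruct Req_EM_T|]; try discriminate;
      injection Hr; intros <-; try lra. apply div_nonneg; auto. apply pow2_ge_0.
    - injection Hr; intros <-; lra. }
  destruct k1 as [K1|].
  2:{ exists 0; simpl; split; auto. nra. }
  destruct (Hk K1 eq_refl) as [K2 [-> [HK2 HK12]]].
  cbv beta iota delta [esq option_map ediv] in Hr |- *.
  assert (HKK : K2 ^ 2 <= K1 ^ 2) by nra.
  destruct (Req_EM_T (K2 ^ 2) 0) as [E2|E2].
  - destruct (Req_EM_T a0 0) as [E0|E0]; cbv beta iota in Hr; [|discriminate].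
    injection Hr; intros <-.
    assert (Ha : a = 0). { rewrite E0 in Hqa. nra. }
    subst a. exists 0. split; [|lra].
    destruct (Req_EM_T (K1 ^ 2) 0).
    + destruct (Req_EM_T 0 0); [reflexivity|lra].
    + f_equal; unfold Rdiv; ring.
  - injection Hr; intros <-.
    destruct (Req_EM_T (K1 ^ 2) 0) as [E1|E1].
    { exfalso. pose proof (pow2_ge_0 K2). lra. }
    eexists; split; [reflexivity|].
    assert (P2 : 0 < K2 ^ 2) by (pose proof (pow2_ge_0 K2); lra).
    replace (q * (a / K1 ^ 2)) with (C * a0 / K1 ^ 2) by (rewrite <- Hqa; unfold Rdiv; ring).
    unfold Rdiv. rewrite Rmult_assoc. apply Rmult_le_compat_l; auto.
    apply Rmult_le_compat_l; auto. apply Rinv_le_contravar; auto.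
Qed.

Theorem mainTheorem12 (A c : R) (hA : 0 < A) (hc : 0 < c)
  (p : nat -> nat) (N : nat -> Type)
  (M : forall n, N n -> nat -> nat -> R)
  (S : forall n, N n -> nat -> bool)
  (beta : forall n, N n -> nat -> R) :
  let lambda := fun n : nat => A * sqrt (ln (INR (p n)) / INR n) in
  (exists xi, c < xi /\
     sup_to_zero_ext N (fun n k =>
       ediv (card (p n) (S n k) * sqrt (ln (INR (p n)) ^ 2 / INR n))
            (esq (kappa n (p n) xi (S n k) (M n k))))) ->
  sup_to_zero N (fun n k =>
     sqrt (ln (INR (p n))) * l1_on (p n) (compl (S n k)) (beta n k)) ->
  exists xi', c < xi' /\
    forall c1, 0 < c1 ->
      sup_to_zero N (fun n k =>
        sqrt (ln (INR (p n))) * mu n (p n) (c1 * lambda n) xi' (beta n k) (M n k)).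
Proof.
  intros lambda [xi [Hxi H1]] H2.
  set (xi' := (c + xi) / 2).
  set (nu := (xi - c) / (2 * (1 + xi))).
  assert (Hnu0 : 0 < nu).
  { unfold nu. apply Rdiv_lt_0_compat; lra. }
  assert (Hnu1 : nu < 1).
  { unfold nu. apply Rmult_lt_reg_r with (2 * (1 + xi)); [lra|].
    unfold Rdiv. rewrite Rmult_assoc, Rinv_l; lra. }
  assert (Hxi'' : (xi' + nu) / (1 - nu) = xi).
  { assert (Hnz : 1 - nu <> 0) by lra.
    assert (Heq : xi' + nu = xi * (1 - nu)) by (unfold xi', nu; field; lra).
    rewrite Heq; field; auto. }
  exists xi'. split; [unfold xi'; lra|].
  intros c1 Hc1 eps Heps.
  set (C := c1 * A / (2 * (1 - nu))).
  assert (HC : 0 < C) by (unfold C; apply Rdiv_lt_0_compat; [nra|lra]).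
  set (eps1 := eps / ((xi' + 1) * (C + 1))).
  set (eps2 := eps * nu / (xi' + 1)).
  assert (Hxi'p : 0 < xi' + 1) by (unfold xi'; lra).
  assert (He1 : 0 < eps1) by (unfold eps1; apply Rdiv_lt_0_compat; nra).
  assert (He2 : 0 < eps2) by (unfold eps2; apply Rdiv_lt_0_compat; nra).
  destruct (H1 eps1 He1) as [n1 Hn1].
  destruct (H2 eps2 He2) as [n2 Hn2].
  exists (Nat.max n1 n2). intros n Hn k.
  destruct (Rle_dec (ln (INR (p n))) 0) as [Hln|Hln].
  { rewrite sqrt_neg_0; auto. lra. }
  assert (Hq : 0 < sqrt (ln (INR (p n)))) by (apply sqrt_lt_R0; lra).
  destruct (Hn1 n ltac:(lia) k) as [r [Hr Hrle]].
  specialize (Hn2 n ltac:(lia) k). simpl in Hn2.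
  set (T := S n k) in *.
  set (a := c1 * lambda n * card (p n) T / (2 * (1 - nu))).
  destruct (key a (card (p n) T * sqrt (ln (INR (p n)) ^ 2 / INR n))
              (sqrt (ln (INR (p n)))) C r
              (kappa n (p n) ((xi' + nu) / (1 - nu)) T (M n k))
              (kappa n (p n) xi T (M n k))) as [b [Hb Hqb]]; auto.
  - apply Rmult_le_pos; [apply card_nonneg|apply sqrt_pos].
  - lra.
  - unfold a, lambda, C.
    replace (ln (INR (p n)) ^ 2 / INR n) with
      (ln (INR (p n)) * (ln (INR (p n)) / INR n)) by (unfold Rdiv; ring).
    rewrite sqrt_mult_alt by lra. field. lra.
  - intros K1 HK1. rewrite Hxi'' in HK1. rewrite HK1. exists K1; split; auto.
    pose proof HK1 as HK. unfold kappa, Inf_ext in HK.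
    destruct excluded_middle_informative as [He|]; [|discriminate].
    injection HK; intros <-. split; [|lra].
    apply (proj2 (glb_exists _ He (kappa_set_nonneg _ _ _ _ _))).
    apply kappa_set_nonneg.
  - set (x := Rmax (l1_on (p n) (compl T) (beta n k) / nu) b).
    unfold mu.
    set (E := fun r0 : R => exists (T0 : nat -> bool) (nu0 b0 : R),
          0 < nu0 < 1 /\
          ediv (c1 * lambda n * card (p n) T0 / (2 * (1 - nu0)))
               (esq (kappa n (p n) ((xi' + nu0) / (1 - nu0)) T0 (M n k))) = Some b0 /\
          r0 = Rmax (l1_on (p n) (compl T0) (beta n k) / nu0) b0).
    assert (HEx : E x) by (exists T, nu, b; auto).
    assert (HElb : forall y, E y -> 0 <= y).
    { intros y [T0 [nu0 [b0 [Hn0 [_ ->]]]]].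
      eapply Rle_trans; [|apply Rmax_l]. apply div_nonneg; [apply l1_nonneg|lra]. }
    destruct (glb_exists E (ex_intro _ x HEx) HElb) as [G _].
    assert (Hinf : Rinf E <= x) by auto.
    assert (Hqx : sqrt (ln (INR (p n))) * x <= Rmax (eps2 / nu) (C * eps1)).
    { assert (Hb1 : sqrt (ln (INR (p n))) * (l1_on (p n) (compl T) (beta n k) / nu)
                 <= eps2 / nu).
      { replace (sqrt (ln (INR (p n))) * (l1_on (p n) (compl T) (beta n k) / nu))
          with ((sqrt (ln (INR (p n))) * l1_on (p n) (compl T) (beta n k)) / nu)
          by (field; lra).
        unfold Rdiv. apply Rmult_le_compat_r; [left; apply Rinv_0_lt_compat; lra|]. auto. }
      assert (Hb2 : sqrt (ln (INR (p n))) * b <= C * eps1).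
      { assert (C * r <= C * eps1) by (apply Rmult_le_compat_l; lra). lra. }
      unfold x, Rmax. destruct Rle_dec; destruct Rle_dec; lra. }
    assert (Hm : (xi' + 1) * Rmax (eps2 / nu) (C * eps1) <= eps).
    { unfold Rmax; destruct Rle_dec.
      - unfold eps1. replace ((xi' + 1) * (C * (eps / ((xi' + 1) * (C + 1)))))
          with (eps * (C / (C + 1))) by (field; lra).
        assert (C / (C + 1) <= 1).
        { apply Rmult_le_reg_r with (C + 1); [lra|]. unfold Rdiv.
          rewrite Rmult_assoc, Rinv_l; lra. }
        nra.
      - unfold eps2. right; field; lra. }
    assert (sqrt (ln (INR (p n))) * ((xi' + 1) * Rinf E)
            <= (xi' + 1) * (sqrt (ln (INR (p n))) * x)).
    { replace (sqrt (ln (INR (p n))) * ((xi' + 1) * Rinf E))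
        with ((xi' + 1) * (sqrt (ln (INR (p n))) * Rinf E)) by ring.
      apply Rmult_le_compat_l; [lra|]. apply Rmult_le_compat_l; lra. }
    assert ((xi' + 1) * (sqrt (ln (INR (p n))) * x) <= (xi' + 1) * Rmax (eps2 / nu) (C * eps1))
      by (apply Rmult_le_compat_l; lra).
    lra.
Qed.
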